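(* Let $\Gamma=(V,E)$ and $\Gamma'=(V',E')$ be layered graphs with unique minimal vertices such that $\Gamma\sim_A\Gamma'$. Then $|V_i|=|V_i'|$ for all $i\in\mathbb N$.
   Context: A layered graph is a finite directed graph $\Gamma=(V,E)$ with $V=\bigsqcup_{i=0}^{N}V_i$ such that every edge from $V_i$ goes to $V_{i-1}$; $|v|=i$ for $v\in V_i$, $V_+=\bigsqcup_{i\ge1}V_i$, every vertex in $V_+$ has at least one outgoing edge, and unique minimal vertex means $|V_0|=1$. The universal labeling algebra $A(\Gamma)$ is presented as $T(V_+)/R_V$ (free algebra on $V_+$ over a field $\mathbb F$ modulo an ideal $R_V$ which is homogeneous for the polynomial degree). The degree grading of $A(\Gamma)$ is $A(\Gamma)_{[i]}$ = span of images of monomials $v_1\cdots v_i$ ($v_j\in V_+$). The vertex filtration is $A(\Gamma)_i$ = span of images of monomials $v_1\cdots v_j$ with $\sum_k|v_k|\le i$. One writes $\Gamma\sim_A\Gamma'$ if there is an algebra isomorphism $A(\Gamma)\to A(\Gamma')$ preserving both the degree grading and the vertex filtration. *)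

(* Defs.v *)
From HB Require Import structures.
From mathcomp Require Import all_boot all_order all_algebra.
Set Implicit Arguments. Unset Strict Implicit. Unset Printing Implicit Defensive.
Import GRing.Theory.
Local Open Scope ring_scope.

(* An element of the free associative algebra F<X> is represented by a formal
   finite linear combination of words; two representatives are identified
   when all their coefficients agree ([ncp_eq]). *)
Section NCPoly.
Variables (F : fieldType).

Definition ncp (X : Type) := seq (F * seq X).

Definition ncp_coef (X : eqType) (p : ncp X) (w : seq X) : F :=
  \sum_(cw <- p | cw.2 == w) cw.1.

Definition ncp_eq (X : eqType) (p q : ncp X) : Prop :=
  forall w, ncp_coef p w = ncp_coef q w.

Definition ncp_zero (X : Type) : ncp X := [::].
Definition ncp_one (X : Type) : ncp X := [:: (1, [::])].
Definition ncp_var (X : Type) (x : X) : ncp X := [:: (1, [:: x])].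
Definition ncp_add (X : Type) (p q : ncp X) : ncp X := p ++ q.
Definition ncp_scale (X : Type) (c : F) (p : ncp X) : ncp X :=
  [seq (c * cw.1, cw.2) | cw <- p].
Definition ncp_sub (X : Type) (p q : ncp X) : ncp X :=
  ncp_add p (ncp_scale (-1) q).
Definition ncp_mul (X : Type) (p q : ncp X) : ncp X :=
  [seq (a.1 * b.1, a.2 ++ b.2) | a <- p, b <- q].
Definition ncp_prod (X : Type) (ps : seq (ncp X)) : ncp X :=
  foldr (@ncp_mul X) (ncp_one X) ps.
Definition ncp_sum (X : Type) (ps : seq (ncp X)) : ncp X :=
  foldr (@ncp_add X) (ncp_zero X) ps.

Definition ncp_subst (X Y : Type) (f : X -> ncp Y) (p : ncp X) : ncp Y :=
  flatten [seq ncp_scale cw.1 (ncp_prod (map f cw.2)) | cw <- p].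

Inductive in_ideal (X : eqType) (G : ncp X -> Prop) : ncp X -> Prop :=
| ideal_zero p : (forall w, ncp_coef p w = 0) -> in_ideal G p
| ideal_gen r : G r -> in_ideal G r
| ideal_add p q : in_ideal G p -> in_ideal G q -> in_ideal G (ncp_add p q)
| ideal_mull a p : in_ideal G p -> in_ideal G (ncp_mul a p)
| ideal_mulr p a : in_ideal G p -> in_ideal G (ncp_mul p a)
| ideal_eq p q : in_ideal G p -> ncp_eq p q -> in_ideal G q.

End NCPoly.

(* Vertices V, edges E (multi-edges allowed), level |v| = lev v,
   an edge e goes from src e to tgt e. *)
Record lgraph := LGraph {
  lg_V : finType;
  lg_E : finType;
  lg_lev : lg_V -> nat;
  lg_src : lg_E -> lg_V;
  lg_tgt : lg_E -> lg_V }.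

Definition layered_umv (G : lgraph) : Prop :=
  [/\ (forall e : lg_E G, lg_lev (lg_src e) = (lg_lev (lg_tgt e)).+1),
      (forall v : lg_V G, (0 < lg_lev v)%N -> exists e : lg_E G, lg_src e = v)
    & #|[set v : lg_V G | lg_lev v == 0%N]| = 1%N].

Definition layer (G : lgraph) (i : nat) : {set lg_V G} :=
  [set v : lg_V G | lg_lev v == i].

Fixpoint gpath (G : lgraph) (v : lg_V G) (pi : seq (lg_E G)) (u : lg_V G) : bool :=
  match pi with
  | [::] => v == u
  | e :: pi' => (lg_src e == v) && gpath (lg_tgt e) pi' u
  end.

Section UnivLabel.
Variables (F : fieldType) (G : lgraph).
Local Notation E := (lg_E G).

(* elementary symmetric (ordered) functions of a path:
   (t - e1)(t - e2)...(t - ek) = sum_j (-1)^j elem j pi t^(k-j) *)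
Fixpoint path_elem (j : nat) (pi : seq E) : ncp F E :=
  match j, pi with
  | 0%N, _ => ncp_one F E
  | j'.+1, [::] => ncp_zero F E
  | j'.+1, e :: pi' =>
      ncp_add (ncp_mul (ncp_var F e) (path_elem j' pi')) (path_elem j pi')
  end.

(* defining relations of the universal labeling algebra A(G) = T(E)/R:
   coefficients of P_{pi1}(t) - P_{pi2}(t) for paths with same origin and end *)
Definition ula_rel (r : ncp F E) : Prop :=
  exists (v u : lg_V G) (pi1 pi2 : seq E) (j : nat),
    [/\ gpath v pi1 u, gpath v pi2 u & r = ncp_sub (path_elem j pi1) (path_elem j pi2)]%type.

Definition ula_ideal : ncp F E -> Prop := in_ideal ula_rel.

(* congruence modulo R: p and q have the same image in A(G) *)
Definition ula_cong (p q : ncp F E) : Prop := ula_ideal (ncp_sub p q).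

(* A path from v in V_+ down to the minimal vertex; its edge-sum is the image
   of the vertex v in A(G) (well defined modulo R), and its length is |v|. *)
Definition down_path (pi : seq E) : Prop :=
  exists v u : lg_V G, [/\ gpath v pi u, (0 < lg_lev v)%N & lg_lev u = 0%N].

Definition path_sum (pi : seq E) : ncp F E := ncp_sum [seq ncp_var F e | e <- pi].

(* image of the monomial v_1 ... v_j given by down-paths ps = (pi_1,...,pi_j) *)
Definition vmono (ps : seq (seq E)) : ncp F E := ncp_prod [seq path_sum pi | pi <- ps].

Definition in_vspan (P : seq (seq E) -> Prop) (p : ncp F E) : Prop :=
  exists L : seq (F * seq (seq E)),
    (forall x, x \in L -> (forall pi, pi \in x.2 -> down_path pi) /\ P x.2) /\
    ula_cong p (ncp_sum [seq ncp_scale x.1 (vmono x.2) | x <- L]).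

Definition in_deg (i : nat) (p : ncp F E) : Prop :=
  in_vspan (fun ps => size ps = i) p.

Definition in_filt (i : nat) (p : ncp F E) : Prop :=
  in_vspan (fun ps => (sumn [seq size pi | pi <- ps] <= i)%N) p.

End UnivLabel.

(* G ~_A G' : an F-algebra isomorphism A(G) -> A(G') (given by lifts f, g of
   it and its inverse to the free algebras) such that it and its inverse
   preserve the degree grading and the vertex filtration. *)
Definition sim_A (F : fieldType) (G G' : lgraph) : Prop :=
  exists (f : lg_E G -> ncp F (lg_E G')) (g : lg_E G' -> ncp F (lg_E G)),
  (forall r, @ula_rel F G r -> @ula_ideal F G' (ncp_subst f r)) /\
  (forall r, @ula_rel F G' r -> @ula_ideal F G (ncp_subst g r)) /\
  (forall e, @ula_cong F G (ncp_subst g (f e)) (ncp_var F e)) /\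
  (forall e', @ula_cong F G' (ncp_subst f (g e')) (ncp_var F e')) /\
  (forall i p, @in_deg F G i p -> @in_deg F G' i (ncp_subst f p)) /\
  (forall i p, @in_deg F G' i p -> @in_deg F G i (ncp_subst g p)) /\
  (forall i p, @in_filt F G i p -> @in_filt F G' i (ncp_subst f p)) /\
  (forall i p, @in_filt F G' i p -> @in_filt F G i (ncp_subst g p)).

(* Main.v *)
Require Import Defs.
From mathcomp Require Import all_boot all_order all_algebra.
From mathcomp Require Import ring zify.
Set Implicit Arguments. Unset Strict Implicit. Unset Printing Implicit Defensive.
Import GRing.Theory.
Local Open Scope ring_scope.

Section Coefs.
Variable F : fieldType.
Variable X : eqType.
Implicit Types p q : ncp F X.

Definition c0 p := ncp_coef p [::].
Definition c1 p (x : X) := ncp_coef p [:: x].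

Lemma ncoef_nil w : ncp_coef ([::] : ncp F X) w = 0.
Proof. by rewrite /ncp_coef big_nil. Qed.

Lemma ncoef_cons (a : F * seq X) p w :
  ncp_coef (a :: p) w = (if a.2 == w then a.1 else 0) + ncp_coef p w.
Proof. by rewrite /ncp_coef big_cons; case: ifP; rewrite ?add0r. Qed.

Lemma ncoef_cat p q w : ncp_coef (p ++ q) w = ncp_coef p w + ncp_coef q w.
Proof. by rewrite /ncp_coef big_cat. Qed.

Lemma ncoef_add p q w : ncp_coef (ncp_add p q) w = ncp_coef p w + ncp_coef q w.
Proof. exact: ncoef_cat. Qed.

Lemma ncoef_scale c p w : ncp_coef (ncp_scale c p) w = c * ncp_coef p w.
Proof.
elim: p => [|a p IH]; first by rewrite /ncp_scale /= !ncoef_nil mulr0.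
rewrite /ncp_scale /= !ncoef_cons -/(ncp_scale c p) IH mulrDr /=.
by case: ifP; rewrite ?mulr0.
Qed.

Lemma ncoef_sub p q w : ncp_coef (ncp_sub p q) w = ncp_coef p w - ncp_coef q w.
Proof. by rewrite /ncp_sub ncoef_add ncoef_scale mulN1r. Qed.

Lemma ncoef_zero w : ncp_coef (ncp_zero F X) w = 0.
Proof. exact: ncoef_nil. Qed.

Lemma ncoef_var (x : X) w : ncp_coef (ncp_var F x) w = ([:: x] == w)%:R.
Proof. by rewrite /ncp_var ncoef_cons ncoef_nil addr0 /=; case: eqP. Qed.

Lemma ncoef_one (w : seq X) : ncp_coef (ncp_one F X) w = ([::] == w)%:R.
Proof. by rewrite /ncp_one ncoef_cons ncoef_nil addr0 /=; case: eqP. Qed.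

Lemma mul_cons (a : F * seq X) p q :
  ncp_mul (a :: p) q = [seq (a.1 * b.1, a.2 ++ b.2) | b <- q] ++ ncp_mul p q.
Proof. by []. Qed.

Lemma c0_mapmul a1 a2 q :
  c0 [seq (a1 * b.1, a2 ++ b.2) | b <- q] = if a2 is [::] then a1 * c0 q else 0.
Proof.
rewrite /c0; elim: q => [|b q IH]; first by rewrite /= !ncoef_nil; case: a2; rewrite ?mulr0.
rewrite /= !ncoef_cons IH /= {IH}; case: a2 => [|x s] /=.
  by case: ifP; rewrite ?mulrDr ?mulr0.
by rewrite addr0.
Qed.

Lemma c1_mapmul a1 a2 q y :
  c1 [seq (a1 * b.1, a2 ++ b.2) | b <- q] y =
  match a2 with [::] => a1 * c1 q y | [:: x] => if x == y then a1 * c0 q else 0 | _ => 0 end.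
Proof.
rewrite /c1 /c0; elim: q => [|b q IH].
  by rewrite /= !ncoef_nil; case: a2 => [|x [|]]; rewrite ?mulr0 //; case: ifP.
rewrite /= !ncoef_cons IH /= {IH}; case: a2 => [|x [|x' s]] /=.
- by case: ifP; rewrite ?mulrDr ?mulr0.
- rewrite eqseq_cons; case: (x == y) => /=; last by rewrite addr0.
  by case: ifP; rewrite ?mulrDr ?mulr0.
- by rewrite ?eqseq_cons ?andbF ?addr0 ?add0r.
Qed.

Lemma c0_mul p q : c0 (ncp_mul p q) = c0 p * c0 q.
Proof.
elim: p => [|a p IH]; first by rewrite /c0 /ncp_mul /= ncoef_nil mul0r.
rewrite mul_cons /c0 ncoef_cat -/(c0 _) c0_mapmul -/(c0 _) IH ncoef_cons -/(c0 p).
by case: a => a1 [|x s] /=; rewrite -/(c0 q) ?mulrDl ?mul0r ?add0r.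
Qed.

Lemma c1_mul p q y : c1 (ncp_mul p q) y = c0 p * c1 q y + c1 p y * c0 q.
Proof.
elim: p => [|a p IH]; first by rewrite /c0 /c1 /ncp_mul /= !ncoef_nil !mul0r addr0.
rewrite mul_cons /c1 ncoef_cat -/(c1 _ _) c1_mapmul -/(c1 _ _) IH /c0 !ncoef_cons.
rewrite -/(c0 p) -/(c1 p y) -/(c0 q).
rewrite -/(c1 q y); case: a => a1 [|x [|x' s]] /=.
- ring.
- rewrite eqseq_cons andbT; case: ifP => _; ring.
- rewrite eqseq_cons /= andbF; ring.
Qed.

Lemma ncoef_mul1 p w : ncp_coef (ncp_mul p (ncp_one F X)) w = ncp_coef p w.
Proof.
elim: p => [|a p IH]; first by rewrite /ncp_mul /= !ncoef_nil.
by rewrite mul_cons /= ncoef_cons IH ncoef_cons mulr1 cats0.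
Qed.

Lemma c0_prod (T : Type) (h : T -> ncp F X) (s : seq T) :
  (forall t, c0 (h t) = 0) -> c0 (ncp_prod (map h s)) = if s is [::] then 1 else 0.
Proof.
move=> H; case: s => [|t s] /=; first by rewrite /c0 ncoef_one.
by rewrite c0_mul H mul0r.
Qed.

Lemma c1_prod (T : Type) (h : T -> ncp F X) (s : seq T) y :
  (forall t, c0 (h t) = 0) ->
  c1 (ncp_prod (map h s)) y = if s is [:: t] then c1 (h t) y else 0.
Proof.
move=> H; case: s => [|t s] /=; first by rewrite /c1 ncoef_one.
rewrite c1_mul H mul0r add0r c0_prod //.
by case: s => [|t' s]; rewrite ?mulr1 ?mulr0.
Qed.

End Coefs.

Section Lin.
Variable F : fieldType.

Definition lin (X : finType) (k : X -> F) (p : ncp F X) := \sum_(x : X) c1 p x * k x.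

Lemma lin_ext (X : finType) (k : X -> F) p q :
  (forall w, ncp_coef p w = ncp_coef q w) -> lin k p = lin k q.
Proof. by move=> H; apply: eq_bigr => x _; rewrite /c1 H. Qed.

Lemma lin_add (X : finType) (k : X -> F) p q : lin k (ncp_add p q) = lin k p + lin k q.
Proof. by rewrite /lin -big_split; apply: eq_bigr => x _; rewrite /c1 ncoef_add mulrDl. Qed.

Lemma lin_scale (X : finType) (k : X -> F) c p : lin k (ncp_scale c p) = c * lin k p.
Proof. by rewrite /lin mulr_sumr; apply: eq_bigr => x _; rewrite /c1 ncoef_scale mulrA. Qed.

Lemma lin_sub (X : finType) (k : X -> F) p q : lin k (ncp_sub p q) = lin k p - lin k q.
Proof. by rewrite /ncp_sub lin_add lin_scale mulN1r. Qed.

Lemma lin_var (X : finType) (k : X -> F) x : lin k (ncp_var F x) = k x.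
Proof.
rewrite /lin (bigD1 x) //= big1 ?addr0; first by rewrite /c1 ncoef_var eqxx mul1r.
by move=> y /negbTE yx; rewrite /c1 ncoef_var eqseq_cons eq_sym yx mul0r.
Qed.

Lemma lin_zero (X : finType) (k : X -> F) : lin k (ncp_zero F X) = 0.
Proof. by rewrite /lin big1 // => x _; rewrite /c1 ncoef_zero mul0r. Qed.

Lemma lin_mul (X : finType) (k : X -> F) p q :
  lin k (ncp_mul p q) = c0 p * lin k q + lin k p * c0 q.
Proof.
rewrite /lin mulr_sumr mulr_suml -big_split; apply: eq_bigr => x _.
rewrite c1_mul /=; ring.
Qed.

Lemma sum_single (X : finType) (a : F) (s : seq X) (k : X -> F) :
  \sum_(x : X) (if s == [:: x] then a else 0) * k x =
  if s is [:: x0] then a * k x0 else 0.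
Proof.
case: s => [|x0 [|x1 s]].
- by rewrite big1 // => x _; rewrite mul0r.
- rewrite (bigD1 x0) //= eqxx big1 ?addr0 // => x /negbTE xx0.
  by rewrite eqseq_cons eq_sym xx0 mul0r.
- by rewrite big1 // => x _; rewrite eqseq_cons /= andbF mul0r.
Qed.

Variables (X Y : finType) (h : X -> ncp F Y).
Hypothesis h0 : forall x, c0 (h x) = 0.

Lemma c0_subst p : c0 (ncp_subst h p) = c0 p.
Proof.
elim: p => [|a p IH]; first by rewrite /c0 /ncp_subst /= !ncoef_nil.
rewrite /ncp_subst /= /c0 ncoef_cat -/(ncp_subst h p); move: IH; rewrite /c0 => ->.
rewrite ncoef_scale ncoef_cons; have := c0_prod (h:=h) a.2 h0; rewrite /c0 => ->.
by case: a => a1 [|x s] /=; rewrite ?mulr1 ?mulr0 ?add0r.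
Qed.

Lemma c1_subst p y : c1 (ncp_subst h p) y = \sum_(x : X) c1 p x * c1 (h x) y.
Proof.
elim: p => [|a p IH].
  by rewrite /c1 /ncp_subst /= ncoef_nil big1 // => x _; rewrite ncoef_nil mul0r.
rewrite /ncp_subst /= /c1 ncoef_cat -/(ncp_subst h p); move: IH; rewrite /c1 => ->.
rewrite ncoef_scale; have := c1_prod (h:=h) a.2 y h0; rewrite /c1 => ->.
under eq_bigr => x _ do rewrite ncoef_cons mulrDl.
rewrite big_split /= sum_single addrC.
by case: a => a1 [|x0 [|x1 s]] /=; rewrite ?mulr0 ?add0r ?addr0 // addrC.
Qed.

Lemma lin_subst (k : Y -> F) p : lin k (ncp_subst h p) = lin (fun x => lin k (h x)) p.
Proof.
rewrite /lin.
under eq_bigr => y _ do rewrite c1_subst mulr_suml.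
rewrite exchange_big /=; apply: eq_bigr => x _.
by rewrite mulr_sumr; apply: eq_bigr => y _; rewrite mulrA.
Qed.

End Lin.

Lemma ideal_lin (F : fieldType) (X : finType) (R : ncp F X -> Prop) (k : X -> F) r :
  (forall r, R r -> c0 r = 0 /\ lin k r = 0) -> in_ideal R r -> c0 r = 0 /\ lin k r = 0.
Proof.
move=> HR; elim => {r}.
- move=> p Hp; split; first by rewrite /c0 Hp.
  by rewrite /lin big1 // => x _; rewrite /c1 Hp mul0r.
- by move=> r /HR.
- move=> p q _ [Hp1 Hp2] _ [Hq1 Hq2]; split; first by rewrite /c0 ncoef_add -!/(c0 _) Hp1 Hq1 addr0.
  by rewrite lin_add Hp2 Hq2 addr0.
- move=> a p _ [H1 H2]; split; first by rewrite c0_mul H1 mulr0.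
  by rewrite lin_mul H1 H2 !mulr0 addr0.
- move=> p a _ [H1 H2]; split; first by rewrite c0_mul H1 mul0r.
  by rewrite lin_mul H1 H2 !mul0r addr0.
- move=> p q _ [H1 H2] Heq; split; first by rewrite /c0 -Heq.
  by rewrite -H2; apply: lin_ext => w; rewrite Heq.
Qed.

Section Graph.
Variables (F : fieldType) (G : lgraph).
Local Notation E := (lg_E G).
Local Notation V := (lg_V G).
Local Notation lev := (@lg_lev G).

Definition hv (w : V) (x : E) : F := (lg_src x == w)%:R - (lg_tgt x == w)%:R.

Lemma gpath_sum v pi u w : gpath v pi u ->
  \sum_(e <- pi) hv w e = (v == w)%:R - (u == w)%:R.
Proof.
elim: pi v => [|e pi IH] v /=; first by move/eqP->; rewrite big_nil subrr.
case/andP => /eqP Hs Hp; rewrite big_cons (IH (lg_tgt e)) // /hv Hs; ring.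
Qed.

Lemma c0_var (x : E) : c0 (ncp_var F x) = 0.
Proof. by rewrite /c0 ncoef_var. Qed.

Lemma c0_pe j (pi : seq E) : c0 (path_elem F j pi) = (j == 0)%N%:R.
Proof.
elim: pi j => [|e pi IH] [|j] //=; try by rewrite /c0 ncoef_one.
  by rewrite /c0 ncoef_nil.
by rewrite /c0 ncoef_add -!/(c0 _) c0_mul c0_var mul0r add0r IH.
Qed.

Lemma lin_pe (k : E -> F) j (pi : seq E) :
  lin k (path_elem F j pi) = if j == 1%N then \sum_(e <- pi) k e else 0.
Proof.
elim: pi j => [|e pi IH] [|j] /=.
- by rewrite /lin big1 // => x _; rewrite /c1 ncoef_one mul0r.
- by rewrite lin_zero; case: ifP => //; rewrite big_nil.
- by rewrite /lin big1 // => x _; rewrite /c1 ncoef_one mul0r.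
- rewrite lin_add lin_mul c0_var mul0r add0r lin_var c0_pe IH big_cons.
  by case: j => [|j] /=; rewrite ?mulr1 ?mulr0 ?add0r ?addr0.
Qed.

Lemma ps_coef (pi : seq E) w : ncp_coef (path_sum F pi) w = ncp_coef (path_elem F 1 pi) w.
Proof.
elim: pi => [|e pi IH] //.
have -> : path_sum F (e :: pi) = ncp_add (ncp_var F e) (path_sum F pi) by [].
have -> : path_elem F 1 (e :: pi) =
  ncp_add (ncp_mul (ncp_var F e) (ncp_one F E)) (path_elem F 1 pi) by case: pi {IH}.
by rewrite !ncoef_add IH ncoef_mul1.
Qed.

Lemma c0_ps (pi : seq E) : c0 (path_sum F pi) = 0.
Proof. by rewrite /c0 ps_coef -/(c0 _) c0_pe. Qed.

Lemma lin_ps (k : E -> F) (pi : seq E) : lin k (path_sum F pi) = \sum_(e <- pi) k e.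
Proof. by rewrite (lin_ext _ (ps_coef pi)) lin_pe. Qed.

Lemma rel_lin w r : @ula_rel F G r -> c0 r = 0 /\ lin (hv w) r = 0.
Proof.
case=> [v [u [pi1 [pi2 [j [H1 H2 ->]]]]]]; split.
  by rewrite /c0 ncoef_sub -!/(c0 _) !c0_pe subrr.
rewrite lin_sub !lin_pe; case: ifP => _; last by rewrite subrr.
by rewrite (gpath_sum w H1) (gpath_sum w H2) subrr.
Qed.

Lemma ideal_hv w r : @ula_ideal F G r -> c0 r = 0 /\ lin (hv w) r = 0.
Proof. by apply: ideal_lin => r' /rel_lin; apply. Qed.

Lemma lin_k0 (X : finType) (p : ncp F X) : lin (fun _ => 0) p = 0.
Proof. by rewrite /lin big1 // => x _; rewrite mulr0. Qed.

Lemma ideal_c0 r : @ula_ideal F G r -> c0 r = 0.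
Proof.
move=> H; have [] := @ideal_lin F E _ (fun _ => 0) r _ H => //.
move=> r' Hr; split; last exact: lin_k0.
by case: Hr => [v [u [pi1 [pi2 [j [H1 H2 ->]]]]]]; rewrite /c0 ncoef_sub -!/(c0 _) !c0_pe subrr.
Qed.

Lemma cong_c0 p q : @ula_cong F G p q -> c0 p = c0 q.
Proof.
by move/ideal_c0; rewrite /c0 ncoef_sub => /eqP; rewrite subr_eq0 => /eqP.
Qed.

Lemma cong_lin w p q : @ula_cong F G p q -> lin (hv w) p = lin (hv w) q.
Proof. by move/(ideal_hv w)=> [_]; rewrite lin_sub => /eqP; rewrite subr_eq0 => /eqP. Qed.

End Graph.

Section Graph2.
Variables (F : fieldType) (G : lgraph).
Local Notation E := (lg_E G).
Local Notation V := (lg_V G).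
Local Notation lev := (@lg_lev G).
Local Notation hvG := (@hv F G).

Lemma c0_vmono (ps : seq (seq E)) : c0 (vmono F ps) = if ps is [::] then 1 else 0.
Proof. by rewrite /vmono c0_prod // => pi; apply: c0_ps. Qed.

Lemma lin_vmono k (ps : seq (seq E)) :
  lin k (vmono F ps) = if ps is [:: pi] then \sum_(e <- pi) k e else 0.
Proof.
have H1 y : c1 (vmono F ps) y = (if ps is [:: pi] then c1 (path_sum F pi) y else 0).
  by rewrite /vmono c1_prod // => pi; apply: c0_ps.
rewrite /lin; under eq_bigr => x _ do rewrite H1.
clear H1; case: ps => [|pi [|pi' ps]].
- by rewrite big1 // => x _; rewrite mul0r.
- by rewrite -lin_ps.
- by rewrite big1 // => x _; rewrite mul0r.
Qed.

Definition vsum (L : seq (F * seq (seq E))) :=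
  ncp_sum [seq ncp_scale x.1 (vmono F x.2) | x <- L].

Lemma ncoef_vsum_cons x L w :
  ncp_coef (vsum (x :: L)) w = x.1 * ncp_coef (vmono F x.2) w + ncp_coef (vsum L) w.
Proof. by rewrite /vsum /= ncoef_add ncoef_scale. Qed.

Lemma ncoef_vsum_nil w : ncp_coef (vsum [::]) w = 0.
Proof. exact: ncoef_nil. Qed.

Lemma ncoef_vmono1 (pi : seq E) w : ncp_coef (vmono F [:: pi]) w = ncp_coef (path_sum F pi) w.
Proof. exact: ncoef_mul1. Qed.

Lemma ncoef_ps_cons (e : E) pi w :
  ncp_coef (path_sum F (e :: pi)) w = ncp_coef (ncp_var F e) w + ncp_coef (path_sum F pi) w.
Proof. exact: ncoef_add. Qed.

Lemma ncoef_ps_nil w : ncp_coef (@path_sum F G [::]) w = 0.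
Proof. exact: ncoef_nil. Qed.

Lemma c0_vsum L : c0 (vsum L) = \sum_(x <- L) x.1 * c0 (vmono F x.2).
Proof.
elim: L => [|x L IH]; first by rewrite big_nil /c0 ncoef_nil.
by rewrite big_cons -IH /vsum /= /c0 ncoef_add ncoef_scale.
Qed.

Lemma lin_vsum k L : lin k (vsum L) = \sum_(x <- L) x.1 * lin k (vmono F x.2).
Proof.
elim: L => [|x L IH]; first by rewrite big_nil lin_zero.
by rewrite big_cons -IH /vsum /= lin_add lin_scale.
Qed.

Lemma vspanE P p : in_vspan P p -> exists L : seq (F * seq (seq E)),
  (forall x, x \in L -> (forall pi, pi \in x.2 -> down_path pi) /\ P x.2) /\
  c0 p = \sum_(x <- L) x.1 * c0 (vmono F x.2) /\
  forall w, lin (hvG w) p = \sum_(x <- L) x.1 * lin (hvG w) (vmono F x.2).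
Proof.
case=> L [HL Hc]; exists L; split => //; split.
  by rewrite -c0_vsum; apply: cong_c0 Hc.
by move=> w; rewrite -lin_vsum; apply: cong_lin Hc.
Qed.

Lemma deg1_c0 p : @in_deg F G 1 p -> c0 p = 0.
Proof.
case/vspanE => L [HL [-> _]]; rewrite big_seq big1 // => x /HL [_].
by rewrite c0_vmono; case: x.2 => // _ [] // _; rewrite mulr0.
Qed.

Hypothesis Hedge : forall e : E, lev (lg_src e) = (lev (lg_tgt e)).+1.

Lemma gpath_lev v pi u : gpath v pi u -> lev v = (size pi + lev u)%N.
Proof.
elim: pi v => [|e pi IH] v /=; first by move/eqP->.
by case/andP => /eqP <- /IH; rewrite Hedge => ->.
Qed.

Lemma filt_lin i q w : @in_filt F G i q -> (i < lev w)%N -> lin (hvG w) q = 0.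
Proof.
move=> Hq Hw; case/vspanE: Hq => L [HL [_ ->]]; rewrite big_seq big1 // => x /HL [Hd].
rewrite lin_vmono; case Ex: x.2 => [|pi [|]] //; rewrite ?mulr0 //.
move=> /= Hs; have [v [u [Hp Hv Hu]]] : down_path pi by apply: Hd; rewrite Ex mem_head.
rewrite (gpath_sum F w Hp).
have Hl := gpath_lev Hp; rewrite addn0 in Hs.
have /negbTE -> : v != w by apply/eqP => Evw; move: Hw; rewrite -Evw Hl Hu addn0 ltnNge Hs.
have /negbTE -> : u != w by apply/eqP => Euw; move: Hw; rewrite -Euw Hu.
by rewrite subrr mulr0.
Qed.

Hypothesis Hout : forall v : V, (0 < lev v)%N -> exists e : E, lg_src e = v.

Lemma down_exists v : exists pi u, gpath v pi u /\ lev u = 0%N.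
Proof.
move Hn: (lev v) => n; elim: n v Hn => [|n IH] v Hn; first by exists [::], v; rewrite /= eqxx.
have [e He] : exists e : E, lg_src e = v by apply: Hout; rewrite Hn.
have [pi [u [Hp Hu]]] := IH (lg_tgt e) (succn_inj (etrans (esym (Hedge e)) (etrans (congr1 lev He) Hn))).
by exists (e :: pi), u; rewrite /= He eqxx Hp.
Qed.

Lemma ps_filt i pi : down_path pi -> (size pi <= i)%N -> @in_filt F G i (path_sum F pi).
Proof.
move=> Hd Hs; exists [:: (1, [:: pi])]; split.
  move=> x; rewrite inE => /eqP -> /=; split; last by rewrite addn0.
  by move=> pi'; rewrite inE => /eqP ->.
apply: ideal_zero => w.
rewrite ncoef_sub -/(vsum _) !ncoef_vsum_cons ncoef_vsum_nil ncoef_vmono1 /=; ring.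
Qed.

Lemma var_deg1 (x : E) : @in_deg F G 1 (ncp_var F x).
Proof.
have [pi [u [Hp Hu]]] := down_exists (lg_tgt x).
have Hx : gpath (lg_src x) (x :: pi) u by rewrite /= eqxx.
have Hdx : down_path (x :: pi) by exists (lg_src x), u; rewrite Hedge.
case Ht: (lev (lg_tgt x)) => [|n].
  exists [:: (1, [:: [:: x]])]; split.
    move=> y; rewrite inE => /eqP -> /=; split => // pi'; rewrite inE => /eqP ->.
    by exists (lg_src x), (lg_tgt x); rewrite /= !eqxx Hedge Ht.
  apply: ideal_zero => w.
  rewrite ncoef_sub -/(vsum _) !ncoef_vsum_cons ncoef_vsum_nil ncoef_vmono1 /=.
  rewrite ncoef_ps_cons ncoef_ps_nil; ring.
exists [:: (1, [:: x :: pi]); (-1, [:: pi])]; split.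
  move=> y; rewrite !inE => /orP [] /eqP -> /=; split => // pi'; rewrite inE => /eqP -> //.
  by exists (lg_tgt x), u; rewrite Ht.
apply: ideal_zero => w.
rewrite ncoef_sub -/(vsum _) !ncoef_vsum_cons ncoef_vsum_nil !ncoef_vmono1 /=.
rewrite ncoef_ps_cons; ring.
Qed.

End Graph2.

Lemma ncoef_subst_var (F : fieldType) (X Y : eqType) (h : X -> ncp F Y) x w :
  ncp_coef (ncp_subst h (ncp_var F x)) w = ncp_coef (h x) w.
Proof. by rewrite /ncp_subst /= cats0 ncoef_scale mul1r ncoef_mul1. Qed.

Lemma sum_delta (F : fieldType) (T : finType) (a : T) (K : T -> F) :
  \sum_(w : T) (a == w)%:R * K w = K a.
Proof.
rewrite (bigD1 a) //= eqxx mul1r big1 ?addr0 // => w /negbTE.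
by rewrite eq_sym => ->; rewrite mul0r.
Qed.

Lemma lev0_uniq (G : lgraph) (u u' : lg_V G) : layered_umv G -> lg_lev u = 0%N -> lg_lev u' = 0%N -> u = u'.
Proof.
case=> _ _ /eqP /cards1P [x Hx] Hu Hu'.
have : u \in [set v : lg_V G | lg_lev v == 0%N] by rewrite inE Hu.
have : u' \in [set v : lg_V G | lg_lev v == 0%N] by rewrite inE Hu'.
by rewrite Hx !inE => /eqP -> /eqP ->.
Qed.

Definition VS (G : lgraph) (i : nat) : {set lg_V G} :=
  [set v : lg_V G | (0 < lg_lev v <= i)%N].

Section Main.
Variables (F : fieldType) (G G' : lgraph).
Local Notation E := (lg_E G).
Local Notation V := (lg_V G).
Local Notation E' := (lg_E G').
Local Notation V' := (lg_V G').
Hypothesis HG : layered_umv G.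
Hypothesis HG' : layered_umv G'.
Variables (f : E -> ncp F E') (g : E' -> ncp F E).
Hypothesis Hgrel : forall r, @ula_rel F G' r -> @ula_ideal F G (ncp_subst g r).
Hypothesis Hgf : forall e, @ula_cong F G (ncp_subst g (f e)) (ncp_var F e).
Hypothesis Hfdeg : forall i p, @in_deg F G i p -> @in_deg F G' i (ncp_subst f p).
Hypothesis Hgdeg : forall i p, @in_deg F G' i p -> @in_deg F G i (ncp_subst g p).
Hypothesis Hffilt : forall i p, @in_filt F G i p -> @in_filt F G' i (ncp_subst f p).

Lemma f0 e : c0 (f e) = 0.
Proof.
case: HG => He Ho _.
have := deg1_c0 (Hfdeg (var_deg1 F He Ho e)).
by rewrite /c0 ncoef_subst_var.
Qed.

Lemma g0 e : c0 (g e) = 0.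
Proof.
case: HG' => He Ho _.
have := deg1_c0 (Hgdeg (var_deg1 F He Ho e)).
by rewrite /c0 ncoef_subst_var.
Qed.

Lemma ex_pi (H : lgraph) : layered_umv H -> forall v : lg_V H,
  exists pi : seq (lg_E H), [exists u, gpath v pi u && (lg_lev u == 0%N)].
Proof.
case=> He Ho _ v; have [pi [u [Hp Hu]]] := down_exists He Ho v.
by exists pi; apply/existsP; exists u; rewrite Hp Hu.
Qed.

Definition pick (H : lgraph) (HH : layered_umv H) (v : lg_V H) := xchoose (ex_pi HH v).

Lemma pickP (H : lgraph) (HH : layered_umv H) (v : lg_V H) :
  exists u, gpath v (pick HH v) u /\ lg_lev u = 0%N.
Proof.
have /existsP [u /andP [Hp /eqP Hu]] := xchooseP (ex_pi HH v).
by exists u.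
Qed.

Section V0.
Variable v0 : V.
Hypothesis Hv0 : (0 < lg_lev v0)%N.

Definition h' (e' : E') : F := lin (hv F v0) (g e').
Definition K (w : V') : F := \sum_(e <- pick HG' w) h' e.

Lemma stepA e' : h' e' = K (lg_src e') - K (lg_tgt e').
Proof.
have [ut [Ht Hut]] := pickP HG' (lg_tgt e').
have [us [Hs Hus]] := pickP HG' (lg_src e').
have Eu : ut = us by apply: lev0_uniq HG' Hut Hus.
set r := ncp_sub (path_elem F 1 (e' :: pick HG' (lg_tgt e'))) (path_elem F 1 (pick HG' (lg_src e'))).
have Hr : @ula_rel F G' r.
  exists (lg_src e'), us, (e' :: pick HG' (lg_tgt e')), (pick HG' (lg_src e')), 1%N.
  by split => //=; rewrite eqxx -Eu.
have [_ H0] := ideal_hv v0 (Hgrel Hr).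
move: H0; rewrite lin_subst; last exact: g0.
rewrite lin_sub !lin_pe /= big_cons -/(h' e') => /eqP; rewrite subr_eq0 => /eqP.
rewrite /K => <-; ring.
Qed.

Lemma stepB q : lin h' q = \sum_(w : V') lin (hv F w) q * K w.
Proof.
rewrite /lin.
under [RHS]eq_bigr => w _ do rewrite mulr_suml.
rewrite exchange_big /=; apply: eq_bigr => e' _.
rewrite stepA.
under eq_bigr => w _ do rewrite /hv -mulrA mulrBl.
rewrite -mulr_sumr sumrB !sum_delta //.
Qed.

Lemma stepC w : lg_lev w = 0%N -> K w = 0.
Proof.
case: HG' => He _ _ Hw.
have [u [Hp Hu]] := pickP HG' w.
have := gpath_lev He Hp; rewrite Hw Hu addn0 => /esym/size0nil.
by rewrite /K => ->; rewrite big_nil.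
Qed.

Lemma stepD v : lin h' (ncp_subst f (path_sum F (pick HG v))) = (v == v0)%:R.
Proof.
rewrite lin_subst; last exact: f0.
have Hk : forall e, lin h' (f e) = hv F v0 e.
  move=> e; rewrite /h'.
  rewrite -(lin_subst g0 (hv F v0) (f e)).
  by rewrite (cong_lin v0 (Hgf e)) lin_var.
rewrite (_ : lin _ _ = lin (hv F v0) (path_sum F (pick HG v))); last first.
  by apply: eq_bigr => e _; rewrite Hk.
rewrite lin_ps.
have [u [Hp Hu]] := pickP HG v.
rewrite (gpath_sum F v0 Hp).
have /negbTE -> : u != v0 by apply/eqP => E0; move: Hv0; rewrite -E0 Hu.
by rewrite subr0.
Qed.

End V0.

Lemma card_le i : (#|VS G i| <= #|VS G' i|)%N.
Proof.
case: (HG) => He Ho _; case: (HG') => He' Ho' _.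
set n := #|VS G i|; set m := #|VS G' i|.
pose q (a : 'I_n) := ncp_subst f (path_sum F (pick HG (enum_val a))).
pose A : 'M[F]_(n, m) := \matrix_(a, b) lin (hv F (enum_val b)) (q a).
suff : row_free A by rewrite /row_free => /eqP <-; apply: rank_leq_col.
rewrite -kermx_eq0; apply/eqP/row_matrixP => k; rewrite row0.
set c := row k (kermx A).
have Hc : c *m A = 0 by rewrite /c -row_mul mulmx_ker row0.
apply/rowP => a; rewrite [RHS]mxE.
set v0 := enum_val a.
have Hv0 : (0 < lg_lev v0 <= i)%N by have := enum_valP a; rewrite inE.
have Hv0' : (0 < lg_lev v0)%N by case/andP: Hv0.
have Hcb b : \sum_(a' < n) c 0 a' * A a' b = 0.
  by have := congr1 (fun M : 'M[F]_(1, m) => M 0 b) Hc; rewrite !mxE.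
have Hq a' : lin (h' v0) (q a') = \sum_(b < m) A a' b * K v0 (enum_val b).
  rewrite stepB.
  transitivity (\sum_(w in VS G' i) lin (hv F w) (q a') * K v0 w); last first.
    by rewrite big_enum_val; apply: eq_bigr => b _; rewrite mxE.
  rewrite [RHS]big_mkcond; apply: eq_bigr => w _; case: ifP => // Hw.
  case: (posnP (lg_lev w)) => [Hw0|Hwp]; first by rewrite stepC // mulr0.
  rewrite (filt_lin He' (i := i)); first by rewrite mul0r.
    apply: Hffilt; apply: (ps_filt F) => //.
    have [u [Hp Hu]] := pickP HG (enum_val a').
    exists (enum_val a'), u; split => //.
    by have := enum_valP a'; rewrite inE => /andP [].
    have [u [Hp Hu]] := pickP HG (enum_val a').
    have := gpath_lev He Hp; rewrite Hu addn0 => <-.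
    by have := enum_valP a'; rewrite inE => /andP [].
  by move: Hw; rewrite inE Hwp /= ltnNge => ->.
have : \sum_(a' < n) c 0 a' * lin (h' v0) (q a') = 0.
  under eq_bigr => a' _ do rewrite Hq mulr_sumr.
  rewrite exchange_big /= big1 // => b _.
  under eq_bigr => a' _ do rewrite mulrA.
  by rewrite -mulr_suml Hcb mul0r.
move=> <-; under eq_bigr => a' _ do rewrite /q stepD //.
rewrite (bigD1 a) //= eqxx mulr1 big1 ?addr0 ?mxE // => a' Ha'.
rewrite (_ : (enum_val a' == v0) = false) ?mulr0 //.
by apply/negbTE; apply: contra Ha' => /eqP /enum_val_inj ->.
Qed.

End Main.
Local Close Scope ring_scope.

Lemma VS_split (H : lgraph) j : #|VS H j.+1| = (#|VS H j| + #|layer H j.+1|)%N.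
Proof.
have E1 : VS H j.+1 :&: VS H j = VS H j.
  by apply/setP => v; rewrite !inE; case: (lg_lev v) => [|l] //=; lia.
have E2 : VS H j.+1 :\: VS H j = layer H j.+1.
  by apply/setP => v; rewrite !inE; case: (lg_lev v) => [|l] //=; lia.
by rewrite -(cardsID (VS H j) (VS H j.+1)) E1 E2.
Qed.

Theorem mainTheorem3 (F : fieldType) (G G' : lgraph) :
  layered_umv G -> layered_umv G' -> sim_A F G G' ->
  forall i : nat, #|layer G i| = #|layer G' i|.
Proof.
move=> HG HG' [f [g [Hr [Hr' [Hgf [Hfg [Hd [Hd' [Hfl Hfl']]]]]]]]] i.
have Heq j : #|VS G j| = #|VS G' j|.
  apply/eqP; rewrite eqn_leq (card_le HG HG' Hr' Hgf Hd Hd' Hfl).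
  by rewrite (card_le HG' HG Hr Hfg Hd' Hd Hfl').
case: i => [|j].
  by case: HG => _ _ ->; case: HG' => _ _ ->.
have := Heq j.+1; rewrite !VS_split Heq; lia.
Qed.
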